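(* Let $f:(L_1,[\cdot,\cdot]_1,\alpha_1)\to(L_2,[\cdot,\cdot]_2,\alpha_2)$ be a surjective morphism of Hom-Lie algebras over a field $F$. If $\mu_A$ is a fuzzy Hom-Lie subalgebra of $L_1$, then the fuzzy set $\mu_{f(A)}$ on $L_2$, defined by $\mu_{f(A)}(y)=\sup_{x\in f^{-1}(y)}\mu_A(x)$ for $y\in f(L_1)$ and $\mu_{f(A)}(y)=0$ otherwise, is a fuzzy Hom-Lie subalgebra of $L_2$.
   Context: A Hom-Lie algebra over $F$ is a triple $(L,[\cdot,\cdot],\alpha)$ with $L$ an $F$-vector space, $\alpha:L\to L$ linear and $[\cdot,\cdot]$ bilinear, skew-symmetric, satisfying $[\alpha(x),[y,z]]+[\alpha(y),[z,x]]+[\alpha(z),[x,y]]=0$. A morphism of Hom-Lie algebras is a linear map $f$ with $f([x,y]_1)=[f(x),f(y)]_2$ and $f\circ\alpha_1=\alpha_2\circ f$. A fuzzy subset $\mu:L\to[0,1]$ is a fuzzy Hom-Lie subalgebra if for all $x,y\in L$, $c\in F$: $\mu(x+y)\ge\min\{\mu(x),\mu(y)\}$, $\mu(cx)\ge\mu(x)$, $\mu([x,y])\ge\min\{\mu(x),\mu(y)\}$, $\mu(\alpha(x))\ge\mu(x)$. *)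

(* Defs.v *)
From HB Require Import structures.
From mathcomp Require Import all_boot all_order all_algebra.
From mathcomp Require Import boolp classical_sets reals.
Set Implicit Arguments. Unset Strict Implicit. Unset Printing Implicit Defensive.
Import Order.TTheory GRing.Theory Num.Theory.
Local Open Scope ring_scope.
Local Open Scope classical_set_scope.

Definition is_hom_lie (F : fieldType) (L : lmodType F)
  (br : L -> L -> L) (al : L -> L) : Prop :=
  [/\ (forall (c : F) x y, al (c *: x + y) = c *: al x + al y),
      (forall (c : F) x y z, br (c *: x + y) z = c *: br x z + br y z),
      (forall (c : F) x y z, br z (c *: x + y) = c *: br z x + br z y),
      (forall x y, br x y = - br y x) &
      (forall x y z, br (al x) (br y z) + br (al y) (br z x) + br (al z) (br x y) = 0)].

Definition is_hom_lie_morphism (F : fieldType) (L1 L2 : lmodType F)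
  (br1 : L1 -> L1 -> L1) (al1 : L1 -> L1)
  (br2 : L2 -> L2 -> L2) (al2 : L2 -> L2) (f : L1 -> L2) : Prop :=
  [/\ (forall (c : F) x y, f (c *: x + y) = c *: f x + f y),
      (forall x y, f (br1 x y) = br2 (f x) (f y)) &
      (forall x, f (al1 x) = al2 (f x))].

Definition is_fuzzy_subset (R : realType) (T : Type) (mu : T -> R) : Prop :=
  forall x, 0 <= mu x <= 1.

Definition is_fuzzy_hom_lie_subalgebra (R : realType) (F : fieldType)
  (L : lmodType F) (br : L -> L -> L) (al : L -> L) (mu : L -> R) : Prop :=
  [/\ is_fuzzy_subset mu,
      (forall x y, Num.min (mu x) (mu y) <= mu (x + y)),
      (forall (c : F) x, mu x <= mu (c *: x)),
      (forall x y, Num.min (mu x) (mu y) <= mu (br x y)) &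
      (forall x, mu x <= mu (al x))].

Definition fuzzy_image (R : realType) (T1 T2 : Type) (f : T1 -> T2)
  (mu : T1 -> R) : T2 -> R :=
  fun y => if pselect (exists x, f x = y)
           then sup [set mu x | x in f @^-1` [set y]]
           else 0.

(* Main.v *)
Require Import Defs.
From HB Require Import structures.
From mathcomp Require Import all_boot all_order all_algebra.
From mathcomp Require Import boolp classical_sets reals.
Import Order.TTheory GRing.Theory Num.Theory.

Set Implicit Arguments.
Section H.
Local Open Scope ring_scope.
Local Open Scope classical_set_scope.
Variables (R : realType) (T1 T2 : Type) (f : T1 -> T2) (mu : T1 -> R).
Hypothesis fsurj : forall y, exists x, f x = y.
Hypothesis mu1 : forall x, mu x <= 1.

Let S y := [set mu x | x in f @^-1` [set y]].

Lemma img_eq y : fuzzy_image f mu y = sup (S y).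
Proof. by rewrite /fuzzy_image; case: pselect => // -[]; apply: fsurj. Qed.

Lemma S_ne y : S y !=set0.
Proof. by case: (fsurj y) => x hx; exists (mu x), x. Qed.

Lemma S_ub y : has_ubound (S y).
Proof. by exists 1 => _ [x _ <-]. Qed.

Lemma le_img x y : f x = y -> mu x <= fuzzy_image f mu y.
Proof. by move=> hx; rewrite img_eq; apply: ub_le_sup; [apply: S_ub|exists x]. Qed.

Lemma img_le y c : (forall x, f x = y -> mu x <= c) -> fuzzy_image f mu y <= c.
Proof. by move=> h; rewrite img_eq; apply: ge_sup; [apply: S_ne| move=> _ [x hx <-]; apply: h]. Qed.

Lemma img_gt y c : c < fuzzy_image f mu y -> exists2 x, f x = y & c < mu x.
Proof.
rewrite img_eq => /(sup_gt (S_ne y)) [_ [x hx <-]] h; by exists x.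
Qed.

Lemma img_min a b c :
  (forall x1 x2, f x1 = a -> f x2 = b -> Num.min (mu x1) (mu x2) <= c) ->
  Num.min (fuzzy_image f mu a) (fuzzy_image f mu b) <= c.
Proof.
move=> h; rewrite leNgt; apply/negP; rewrite lt_min => /andP[/img_gt[x1 h1 l1] /img_gt[x2 h2 l2]].
have := h _ _ h1 h2; rewrite leNgt lt_min l1 l2 //.
Qed.
End H.
Arguments le_img {R T1 T2 f mu} fsurj mu1 {x y}.

Local Open Scope ring_scope.
Theorem theorem6p2 (R : realType) (F : fieldType) (L1 L2 : lmodType F)
  (br1 : L1 -> L1 -> L1) (al1 : L1 -> L1)
  (br2 : L2 -> L2 -> L2) (al2 : L2 -> L2) (f : L1 -> L2) (mu : L1 -> R) :
  is_hom_lie br1 al1 -> is_hom_lie br2 al2 ->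
  is_hom_lie_morphism br1 al1 br2 al2 f ->
  (forall y : L2, exists x : L1, f x = y) ->
  is_fuzzy_hom_lie_subalgebra br1 al1 mu ->
  is_fuzzy_hom_lie_subalgebra br2 al2 (fuzzy_image f mu).
Proof.
move=> _ _ [fl fbr fal] fs [fz madd mscal mbr mal].
have mu1 x : (mu x <= 1)%R by case/andP: (fz x).
have f0 : f 0%R = 0%R.
  have h := fl 1 0 0; rewrite !scale1r addr0 in h.
  by apply: (addrI (f 0)); rewrite addr0 -h.
have fZ c x : f (c *: x) = c *: f x by have := fl c x 0; rewrite !addr0 f0 addr0.
have fD x y : f (x + y) = f x + f y by have := fl 1 x y; rewrite !scale1r.
split.
- move=> y; apply/andP; split.
  + case: (fs y) => x hx; apply: (@le_trans _ _ (mu x)); last exact: (le_img fs mu1 hx).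
    by case/andP: (fz x).
  + by apply: img_le => // x _.
- move=> a b; apply: img_min => // x1 x2 h1 h2; apply: (le_trans (madd x1 x2)).
  by apply: (le_img fs mu1); rewrite fD h1 h2.
- move=> c y; apply: img_le => // x hx; apply: (le_trans (mscal c x)).
  by apply: (le_img fs mu1); rewrite fZ hx.
- move=> a b; apply: img_min => // x1 x2 h1 h2; apply: (le_trans (mbr x1 x2)).
  by apply: (le_img fs mu1); rewrite fbr h1 h2.
- move=> y; apply: img_le => // x hx; apply: (le_trans (mal x)).
  by apply: (le_img fs mu1); rewrite fal hx.
Qed.
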